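(* The optimal profile $\mathbf{a}^{*}$ lies in $\mathcal{D}(B):=\{\mathbf{a}\in (0,p_{1})\times \ldots \times (0,p_{K}): \sum_{k=1}^{K}c_{k}a_{k} \leq B \}$, i.e., no coordinate $a^{*}_k$ lies on the natural boundary $\{0,p_k\}$.
   Context: Let $V$ be a set of $n$ vertices and let the $\binom{n}{2}$ possible edges be partitioned into $K$ parts $\mathcal{P}_1,\ldots,\mathcal{P}_K$, where every edge in part $k$ has cost $c_k$ with $0<c_k<\infty$. Let $P_k=|\mathcal{P}_k|$ and $p_k=P_k/n$ (the average number of possible edges of part $k$ per vertex). For a budget $B\ge 0$, consider the optimization problem $(\Lambda)$: maximize $H(\mathbf{a}) = - \sum_{k=1}^{K} \left[(p_{k}-a_{k})\log(p_{k}-a_{k})+a_{k}\log(a_{k})\right]$ over $\mathbf{a}=(a_1,\ldots,a_K)$ subject to $\sum_{k=1}^{K}a_{k}c_{k} \leq B$ and $0\leq a_{k} \leq p_{k}$ for all $k\in[K]$. Let $\mathbf{a}^{*}=\mathbf{a}^{*}(B)$ denote its solution. *)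

(* Defs.v *)
(* R : realType, ln from mathcomp-analysis (ln 0 = 0, so 0*ln 0 = 0). *)
From HB Require Import structures.
From mathcomp Require Import all_boot all_order all_algebra.
From mathcomp Require Import reals exp.
Set Implicit Arguments. Unset Strict Implicit. Unset Printing Implicit Defensive.
Import Order.TTheory GRing.Theory Num.Theory.
Local Open Scope ring_scope.

Definition pk {R : realType} (n : nat) {K : nat} (P : 'I_K -> nat) (k : 'I_K) : R :=
  (P k)%:R / n%:R.

Definition Hent {R : realType} {K : nat} (p a : 'I_K -> R) : R :=
  - \sum_(k < K) ((p k - a k) * ln (p k - a k) + a k * ln (a k)).

Definition feasible {R : realType} {K : nat} (p c : 'I_K -> R) (B : R)
  (a : 'I_K -> R) : Prop :=
  \sum_(k < K) a k * c k <= B /\ (forall k, 0 <= a k <= p k).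

Definition is_solution {R : realType} {K : nat} (p c : 'I_K -> R) (B : R)
  (a : 'I_K -> R) : Prop :=
  feasible p c B a /\ (forall b, feasible p c B b -> Hent p b <= Hent p a).

Definition inD {R : realType} {K : nat} (p c : 'I_K -> R) (B : R)
  (a : 'I_K -> R) : Prop :=
  (forall k, 0 < a k < p k) /\ \sum_(k < K) c k * a k <= B.

(* Main.v *)
Require Import Defs.
From mathcomp Require Import all_boot all_order all_algebra.
From mathcomp Require Import reals exp.
From mathcomp Require Import ring lra.
Import Order.TTheory GRing.Theory Num.Theory.
Local Open Scope ring_scope.

Section S.
Variable R : realType.
Definition g (p x : R) := (p - x) * ln (p - x) + x * ln x.

Lemma sum1 K (f1 f2 : 'I_K -> R) k : (forall i, i != k -> f1 i = f2 i) ->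
  \sum_i f1 i - \sum_i f2 i = f1 k - f2 k.
Proof.
move=> H; rewrite (bigD1 k) //= [X in _ - X](bigD1 k) //=.
rewrite [X in _ - (_ + X)](eq_bigr (fun i => f1 i)); last by move=> i /H.
lra.
Qed.

Lemma sum2 K (f1 f2 : 'I_K -> R) k j : j != k ->
  (forall i, i != k -> i != j -> f1 i = f2 i) ->
  \sum_i f1 i - \sum_i f2 i = (f1 k - f2 k) + (f1 j - f2 j).
Proof.
move=> jk H; rewrite (bigD1 k) //= [X in _ - X](bigD1 k) //=.
rewrite (bigD1 j) //= [X in _ - (_ + X)](bigD1 j) //=.
rewrite [X in _ - (_ + (_ + X))](eq_bigr (fun i => f1 i)); last first.
  by move=> i /andP[h1 h2]; rewrite H.
lra.
Qed.

Lemma lemA (p : R) : 0 < p -> g p (p / 2) < g p p.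
Proof.
move=> hp; rewrite /g subrr mul0r add0r.
have -> : p - p / 2 = p / 2 by field.
rewrite ln_div ?posrE //.
have h2 : 0 < ln (2 : R) by apply: ln_gt0; lra.
have : 0 < p * ln 2 by apply: mulr_gt0.
lra.
Qed.

Lemma lemB (p t : R) : 0 < t -> t < p -> g p 0 - g p t >= t * (ln p - ln t).
Proof.
move=> ht htp; rewrite /g subr0 mul0r addr0.
have : ln (p - t) <= ln p by rewrite ler_ln ?posrE; lra.
have : 0 <= p - t by lra.
nra.
Qed.

Lemma lemU (u v : R) : 0 <= u -> 0 < v -> (u + v) * ln (u + v) - u * ln u <= v + v * ln (u + v).
Proof.
move=> hu hv; have [->|u0] := eqVneq u 0.
  by rewrite mul0r subr0 add0r; lra.
have upos : 0 < u by rewrite lt_neqAle eq_sym u0.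
have h1 : ln (u + v) - ln u <= v / u.
  rewrite -ln_div ?posrE; try lra.
  have -> : (u + v) / u = 1 + v / u by field; lra.
  apply: le_ln1Dx; have : 0 < v / u by apply: divr_gt0.
  lra.
have h2 : u * (ln (u + v) - ln u) <= u * (v / u) by rewrite ler_pM2l.
have h3 : u * (v / u) = v by field; lra.
lra.
Qed.

Lemma lemC (p x d : R) : 0 < d -> 2 * d <= x -> x <= p ->
  g p (x - d) - g p x <= d * (1 + p - ln x).
Proof.
move=> hd hx hxp; rewrite /g.
have -> : p - (x - d) = (p - x) + d by ring.
have h0 : 0 <= p - x by lra.
have hU := lemU (p - x) d h0 hd.
have h1 : ln (p - x + d) <= p.
  have := ln_sublinear (_ : 0 < p - x + d); lra.
have h2 : ln (x - d) <= ln x by rewrite ler_ln ?posrE; lra.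
have h3 : d * ln (p - x + d) <= d * p by rewrite ler_pM2l.
have h4 : (x - d) * ln (x - d) <= (x - d) * ln x by rewrite ler_wpM2l //; lra.
have h5 : (x - d) * ln x = x * ln x - d * ln x by ring.
lra.
Qed.
End S.
Arguments g {R}.
Arguments lemA {R}.
Arguments lemB {R}.
Arguments lemC {R}.

Theorem lemma1 (R : realType) (n K : nat) (P : 'I_K -> nat) (c : 'I_K -> R) (B : R)
  (a : 'I_K -> R) :
  (0 < n)%N ->
  (\sum_(k < K) P k)%N = 'C(n, 2) ->
  (forall k, (0 < P k)%N) ->
  (forall k, 0 < c k) ->
  0 < B ->
  is_solution (pk n P) c B a ->
  inD (pk n P) c B a.
Proof.
move=> hn _ hP hc hB [[hbud hbox] hopt].
set p := pk n P in hbox hopt *.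
have ppos : forall k, 0 < p k.
  by move=> k; rewrite /p /pk divr_gt0 // ltr0n.
have opt : forall b, feasible p c B b ->
    \sum_(i < K) g (p i) (a i) <= \sum_(i < K) g (p i) (b i).
  by move=> b /hopt; rewrite /Hent lerN2.
split; last first.
  by rewrite (eq_bigr (fun i => a i * c i)) // => i _; rewrite mulrC.
move=> k; have /andP[h0 hp] := hbox k.
have pk0 := ppos k.
apply/andP; split.
- rewrite lt_neqAle h0 andbT; apply/negP => /eqP ak0.
  case: (boolP [exists j, 0 < a j]) => [/existsP[j hj]|hnone].
  + have jk : j != k by apply/eqP => ejk; move: hj; rewrite ejk -ak0 ltxx.
    have cj := hc j; have ck := hc k; have pj := ppos j.
    have /andP[hj0 hjp] := hbox j.
    set r := c j / c k.
    have r0 : 0 < r by apply: divr_gt0.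
    set L := 1 + p j - ln (a j).
    set y := Order.min (p k / 2) (sequences.expR (ln (p k) - L / r - 1)).
    have y0 : 0 < y by rewrite lt_min expR_gt0 andbT; lra.
    have yp : y <= p k / 2 by rewrite ge_min lexx.
    have yl : ln y <= ln (p k) - L / r - 1.
      rewrite -[X in _ <= X]expRK ler_ln ?posrE ?expR_gt0 //.
      by rewrite ge_min lexx orbT.
    set s := Order.min (r * a j / 2) y.
    have s0 : 0 < s by rewrite lt_min y0 andbT; apply: divr_gt0 => //; apply: mulr_gt0.
    have sy : s <= y by rewrite ge_min lexx orbT.
    have sa : s <= r * a j / 2 by rewrite ge_min lexx.
    set d := s / r.
    have d0 : 0 < d by apply: divr_gt0.
    have hsd : s = r * d by rewrite /d; field; lra.
    have hd2 : 2 * d <= a j.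
      have : r * d <= r * (a j / 2) by rewrite -hsd; move: sa; rewrite mulrA.
      rewrite ler_pM2l //; lra.
    have ls : ln s <= ln y by rewrite ler_ln ?posrE.
    set b := fun i => if i == k then s else if i == j then a j - d else a i.
    have fb : feasible p c B b.
      split.
      * suff -> : \sum_(i < K) b i * c i = \sum_(i < K) a i * c i by [].
        apply/eqP; rewrite -subr_eq0; apply/eqP.
        rewrite (@sum2 R K (fun i => b i * c i) (fun i => a i * c i) k j jk).
          rewrite /b eqxx (negbTE jk) eqxx -ak0 /r.
          rewrite hsd /r; field; lra.
        by move=> i ik ij; rewrite /b (negbTE ik) (negbTE ij).
      * move=> i; rewrite /b; case: eqP => [->|ik].
          by apply/andP; split; lra.
        case: eqP => [->|ij]; first by apply/andP; split; lra.
        exact: hbox.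
    have := opt b fb.
    have := @sum2 R K (fun i => g (p i) (b i)) (fun i => g (p i) (a i)) k j jk.
    rewrite /b eqxx (negbTE jk) eqxx -ak0 /=.
    move=> /(_ (fun i ik ij => ltac:(by rewrite /= (negbTE ik) (negbTE ij)))) hsum.
    have gain := lemB (p k) s s0 (_ : s < p k).
    have loss := lemC (p j) (a j) d d0 hd2 hjp.
    have h1 : s * (L / r + 1) <= s * (ln (p k) - ln s) by rewrite ler_pM2l //; lra.
    have h2 : s * (L / r) = d * L by rewrite hsd; field; lra.
    move: gain => /(_ _) gain; have := gain ltac:(lra).
    rewrite /L in h1 h2 loss *; lra.
  + have a0 : forall i, a i = 0.
      move=> i; have /andP[hi _] := hbox i.
      apply/eqP; rewrite eq_le hi andbT leNgt; apply/negP => hi'.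
      by move/existsP: hnone; apply; exists i.
    have ck := hc k.
    set t := Order.min (p k / 2) (B / c k).
    have t0 : 0 < t by rewrite lt_min; apply/andP; split; [lra|apply: divr_gt0].
    have tp : t <= p k / 2 by rewrite ge_min lexx.
    have tB : t <= B / c k by rewrite ge_min lexx orbT.
    set b := fun i => if i == k then t else a i.
    have fb : feasible p c B b.
      split.
      * have := @sum1 R K (fun i => b i * c i) (fun i => a i * c i) k.
        rewrite /b eqxx /= => /(_ (fun i ik => ltac:(by rewrite /= (negbTE ik)))).
        move=> h.
        have hs : \sum_(i < K) a i * c i = 0 by rewrite big1 // => i _; rewrite a0 mul0r.
        rewrite hs -ak0 mul0r !subr0 in h; rewrite h.
        have : t * c k <= B / c k * c k by rewrite ler_pM2r.
        have -> : B / c k * c k = B by field; lra.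
        by [].
      * move=> i; rewrite /b; case: eqP => [->|ik]; last exact: hbox.
        by apply/andP; split; lra.
    have := opt b fb.
    have := @sum1 R K (fun i => g (p i) (b i)) (fun i => g (p i) (a i)) k.
    rewrite /b eqxx /= -ak0 => /(_ (fun i ik => ltac:(by rewrite /= (negbTE ik)))) hsum.
    have gain := lemB (p k) t t0 (_ : t < p k).
    have lt' : ln t < ln (p k) by rewrite ltr_ln ?posrE //; lra.
    have : 0 < t * (ln (p k) - ln t) by apply: mulr_gt0; lra.
    have := gain ltac:(lra).
    lra.
- rewrite lt_neqAle hp andbT; apply/negP => /eqP akp.
  set b := fun i => if i == k then p k / 2 else a i.
  have fb : feasible p c B b.
    split.
    * apply: le_trans hbud; apply: ler_sum => i _; rewrite /b.
      case: eqP => [->|_] //; rewrite akp ler_pM2r //; lra.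
    * move=> i; rewrite /b; case: eqP => [->|ik]; last exact: hbox.
      by apply/andP; split; lra.
  have := opt b fb.
  have := @sum1 R K (fun i => g (p i) (b i)) (fun i => g (p i) (a i)) k.
  rewrite /b eqxx /= akp => /(_ (fun i ik => ltac:(by rewrite /= (negbTE ik)))) hsum.
  have := lemA (p k) pk0.
  lra.
Qed.
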